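(* Let $\mathcal F=\{F^c_{t,k}\}$ be an F-system and $R,\lambda$ reals such that $|F^A_t\cup F^B_t|\le Rt+\lambda$ for every positive integer $t$. Then for every even positive integer $t$, $$|S_{2t}\cup Z_{3t,2t}|\ge 2\,|S_t\cup Z_{3t/2,t}|+(10-7R)t-3\lambda.$$
   Context: F-system: a family $\mathcal F=\{F^c_{t,k}\}$ of sets of positive integers, indexed by $c\in\{A,B\}$ and integers $0<k\le t$, such that (F1) $|F^c_{t,k}|\ge k$ for all $c,t,k$; and (F2) $F^A_{t,k}\cap F^B_{t',k'}=\emptyset$ for all $k\le t$, $k'\le t'$ with $k+k'\le\max(t,t')$. Notation: $F^c_t=\bigcup_{0<\kappa\le\tau\le t}F^c_{\tau,\kappa}$ for $c\in\{A,B\}$; $S_t=F^A_t\cap F^B_t$; for even $t$, $Z_{3t/2,t}=F^A_{3t/2,t}\cap F^B_{3t/2,t}$ (so also $Z_{3t,2t}=F^A_{3t,2t}\cap F^B_{3t,2t}$). *)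

(* Defs.v *)
From Stdlib Require Import Reals.
From mathcomp Require Import all_boot.
Set Implicit Arguments. Unset Strict Implicit. Unset Printing Implicit Defensive.

(* A family F^c_{t,k} is modelled as  F : bool -> nat -> nat -> seq nat,
   F c t k being (a list enumerating) the set F^c_{t,k};
   c = true stands for A, c = false stands for B.
   Lists are read as sets: membership is [\in], cardinality is [scard]. *)

Definition scard (s : seq nat) : nat := size (undup s).

Definition is_Fsystem (F : bool -> nat -> nat -> seq nat) : Prop :=
  (forall c t k, (0 < k <= t)%N -> forall x, x \in F c t k -> (0 < x)%N) /\
  (forall c t k, (0 < k <= t)%N -> (k <= scard (F c t k))%N) /\
  (forall t k t' k', (0 < k <= t)%N -> (0 < k' <= t')%N ->
     (k + k' <= maxn t t')%N ->
     forall x, x \in F true t k -> x \in F false t' k' -> False).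

Definition FU (F : bool -> nat -> nat -> seq nat) (c : bool) (t : nat) : seq nat :=
  flatten [seq flatten [seq F c tau kappa | kappa <- iota 1 tau] | tau <- iota 1 t].

Definition Sset (F : bool -> nat -> nat -> seq nat) (t : nat) : seq nat :=
  [seq x <- FU F true t | x \in FU F false t].

Definition Zset (F : bool -> nat -> nat -> seq nat) (a b : nat) : seq nat :=
  [seq x <- F true a b | x \in F false a b].

(* Main.v *)
Require Import Defs.
From Stdlib Require Import Reals.
From mathcomp Require Import all_boot.
From Stdlib Require Import Lra Lia.
Open Scope R_scope.

Lemma sum_count (r : seq nat) (a : pred nat) :
  (\sum_(i <- r) (a i : nat) = count a r)%N.
Proof. elim: r => [|x r IH]; first by rewrite big_nil. by rewrite big_cons IH. Qed.

Lemma scard_sum (l : seq nat) N : (forall x, x \in l -> x < N)%N ->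
  scard l = (\sum_(i <- iota 0 N) (i \in l : nat))%N.
Proof.
move=> H; rewrite (sum_count _ (mem l)) -size_filter /scard.
apply: perm_size; apply: uniq_perm.
- exact: undup_uniq.
- by apply: filter_uniq; apply: iota_uniq.
move=> x; rewrite mem_undup mem_filter mem_iota /= add0n.
by case Hx: (x \in l) => //=; rewrite H.
Qed.

Lemma memFU F c t x :
  reflect (exists tau kappa, [/\ (0 < kappa)%N, (kappa <= tau)%N, (tau <= t)%N & x \in F c tau kappa])
          (x \in FU F c t).
Proof.
apply: (iffP flatten_mapP).
- case=> tau Htau /flatten_mapP [kappa Hk Hx].
  move: Htau Hk; rewrite !mem_iota !add1n !ltnS => /andP [H1 H2] /andP [K1 K2].
  by exists tau, kappa.
- move=> [tau [kappa [K1 K2 K3 Hx]]].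
  exists tau; first by rewrite mem_iota (leq_trans K1 K2) /= add1n ltnS.
  apply/flatten_mapP; exists kappa => //.
  by rewrite mem_iota K1 /= add1n ltnS.
Qed.

Lemma bool_ineq (X Y A2 B2 U3 p q r p' q' r' : bool) :
 [&& Y ==> X, Y ==> A2, Y ==> B2, Y ==> ~~p, Y ==> ~~p', Y ==> ~~r, Y ==> ~~r',
     p ==> ~~p', p ==> ~~r', r ==> ~~p', p ==> A2, q ==> A2, p' ==> B2, q' ==> B2,
     A2 ==> B2 ==> X, r ==> r' ==> X, A2 ==> U3, B2 ==> U3, r ==> U3 & r' ==> U3] ->
 (Y + Y + p + q + r + p' + q' + r' <= X + (A2 || B2) + (A2 || B2) + U3)%N.
Proof.
move: X Y A2 B2 U3 p q r p' q' r'.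
by do 11 case.
Qed.

Lemma FU_mono F c t t' x : (t <= t')%N -> x \in FU F c t -> x \in FU F c t'.
Proof.
move=> Htt /memFU [tau [kappa [K1 K2 K3 Hx]]]; apply/memFU.
by exists tau, kappa; split => //; apply: leq_trans Htt.
Qed.

Lemma F_FU F c t k x : (0 < k)%N -> (k <= t)%N -> x \in F c t k -> x \in FU F c t.
Proof. by move=> K1 K2 Hx; apply/memFU; exists t, k. Qed.

Arguments FU_mono {F c t t' x}.
Arguments F_FU {F c t k x}.
Arguments memFU {F c t x}.

Lemma nat_to_R a b c d f : (a + a + 10*f <= b + c + c + d)%N ->
  INR a + INR a + 10 * INR f <= INR b + INR c + INR c + INR d.
Proof.
move/leP => H.
rewrite -?plusE -?multE in H.
apply le_INR in H.
have E := mult_INR 10 f.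
have E1 := plus_INR (Nat.add a a) (Nat.mul 10 f).
have E2 := plus_INR a a.
have E3 := plus_INR (Nat.add (Nat.add b c) c) d.
have E4 := plus_INR (Nat.add b c) c.
have E5 := plus_INR b c.
have E6 : INR 10 = 10 by simpl; lra.
rewrite E6 in E.
lra.
Qed.

Ltac tolia := rewrite ?maxnE; repeat match goal with
 | H : is_true (leq _ _) |- _ => move/leP: H; rewrite -?plusE -?multE -?minusE => H end; apply/leP; rewrite -?plusE -?multE -?minusE; lia.

Theorem mainTheorem9 (F : bool -> nat -> nat -> seq nat) (R0 lam : R) :
  is_Fsystem F ->
  (forall t : nat, (0 < t)%N ->
     INR (scard (FU F true t ++ FU F false t)) <= R0 * INR t + lam) ->
  forall t : nat, (0 < t)%N -> ~~ odd t ->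
    INR (scard (Sset F (2 * t) ++ Zset F (3 * t) (2 * t)))
    >= 2 * INR (scard (Sset F t ++ Zset F ((3 * t) %/ 2) t))
       + (10 - 7 * R0) * INR t - 3 * lam.
Proof.
move=> [Hpos [HF1 HF2]] HU t Ht _.
set h := ((3 * t) %/ 2)%N.
have Hth : (t <= h)%N by rewrite /h leq_divRL // mulnC leq_mul2r leqnSn orbT.
have Hh2 : (h <= 2 * t)%N.
  rewrite /h -ltnS ltn_divLR //; apply/ltP; rewrite -!multE; lia.
have Ht2 : (t <= 2 * t)%N by rewrite mul2n -addnn leq_addr.
have H23 : (2 * t <= 3 * t)%N by rewrite leq_mul2r leqnSn orbT.
have Ht2' : (0 < 2 * t)%N by tolia.
have Hmax2 : forall tau, (2 * t <= maxn (2 * t) tau)%N by move=> tau; rewrite leq_maxl.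
set Yl := (Sset F t ++ Zset F h t).
have YB : forall c x, x \in Yl -> exists tau kappa,
    [/\ (0 < kappa)%N, (kappa <= tau)%N, (tau <= 2 * t)%N, (kappa <= t)%N & x \in F c tau kappa].
  move=> c x; rewrite mem_cat => /orP [].
  - rewrite mem_filter => /andP [HB HA].
    have : x \in FU F c t by case: c.
    move=> /memFU [tau [kappa [K1 K2 K3 Hx]]].
    exists tau, kappa; split => //; [exact: leq_trans K3 Ht2 | exact: leq_trans K2 K3].
  - rewrite mem_filter => /andP [HA HB].
    exists h, t; split => //; case: c => //.
have F2 : forall x tt k tt' k', (0 < k)%N -> (k <= tt)%N -> (0 < k')%N -> (k' <= tt')%N ->
    (k + k' <= maxn tt tt')%N -> x \in F true tt k -> x \in F false tt' k' -> False.
  move=> x tt k tt' k' K1 K2 K3 K4 K5; apply: (HF2 tt k tt' k') => //; apply/andP; split => //.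
set Xl := (Sset F (2 * t) ++ Zset F (3 * t) (2 * t)).
set U2l := (FU F true (2 * t) ++ FU F false (2 * t)).
set U3l := (FU F true (3 * t) ++ FU F false (3 * t)).
have key : forall x, ((x \in Yl) + (x \in Yl) + (x \in F true (2 * t) t) + (x \in F true (2 * t) (2 * t))
   + (x \in F true (3 * t) (2 * t)) + (x \in F false (2 * t) t) + (x \in F false (2 * t) (2 * t))
   + (x \in F false (3 * t) (2 * t)) <= (x \in Xl) + (x \in U2l) + (x \in U2l) + (x \in U3l))%N.
  move=> x.
  have YA2 : x \in Yl -> x \in FU F true (2 * t).
    move=> /(YB true) [tau [kappa [K1 K2 K3 K4 Hx]]].
    exact: FU_mono K3 (F_FU K1 K2 Hx).
  have YB2 : x \in Yl -> x \in FU F false (2 * t).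
    move=> /(YB false) [tau [kappa [K1 K2 K3 K4 Hx]]].
    exact: FU_mono K3 (F_FU K1 K2 Hx).
  have ABX : x \in FU F true (2 * t) -> x \in FU F false (2 * t) -> x \in Xl.
    by move=> HA HB; rewrite mem_cat mem_filter HA HB.
  have A2U3 : x \in FU F true (2 * t) -> x \in U3l.
    by move=> HA; rewrite mem_cat (FU_mono H23 HA).
  have B2U3 : x \in FU F false (2 * t) -> x \in U3l.
    by move=> HB; rewrite mem_cat (FU_mono H23 HB) orbT.
  rewrite [x \in U2l]mem_cat; apply: bool_ineq.
  repeat (apply/andP; split).
  all: try (apply/implyP => HY).
  - exact: ABX (YA2 HY) (YB2 HY).
  - exact: YA2.
  - exact: YB2.
  - apply/negP => Hp; move: HY => /(YB false) [tau [kappa [K1 K2 K3 K4 Hx]]].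
    apply: (F2 x (2 * t)%N t tau kappa) => //; tolia.
  - apply/negP => Hp; move: HY => /(YB true) [tau [kappa [K1 K2 K3 K4 Hx]]].
    apply: (F2 x tau kappa (2 * t)%N t) => //; tolia.
  - apply/negP => Hp; move: HY => /(YB false) [tau [kappa [K1 K2 K3 K4 Hx]]].
    apply: (F2 x (3 * t)%N (2 * t)%N tau kappa) => //; tolia.
  - apply/negP => Hp; move: HY => /(YB true) [tau [kappa [K1 K2 K3 K4 Hx]]].
    apply: (F2 x tau kappa (3 * t)%N (2 * t)%N) => //; tolia.
  - apply/negP => Hp; apply: (F2 x (2 * t)%N t (2 * t)%N t) => //; tolia.
  - apply/negP => Hp; apply: (F2 x (2 * t)%N t (3 * t)%N (2 * t)%N) => //; tolia.
  - apply/negP => Hp; apply: (F2 x (3 * t)%N (2 * t)%N (2 * t)%N t) => //; tolia.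
  - exact: F_FU HY.
  - exact: F_FU HY.
  - exact: F_FU HY.
  - exact: F_FU HY.
  - apply/implyP => HZ; exact: ABX.
  - apply/implyP => HZ; rewrite /Xl mem_cat; apply/orP; right; by rewrite mem_filter HY HZ.
  - exact: A2U3.
  - exact: B2U3.
  - by rewrite mem_cat (F_FU _ _ HY) //; tolia.
  - by rewrite mem_cat (F_FU _ _ HY) ?orbT //; tolia.
pose N := (\max_(y <- U3l) y).+1%N.
have inN : forall x, x \in U3l -> (x < N)%N.
  move=> x Hx; rewrite ltnS.
  exact: (@leq_bigmax_seq _ U3l xpredT (fun y => y) x Hx).
have Hs2 := @leq_sum _ (iota 0 N) xpredT _ _ (fun i (_ : xpredT i) => key i).
rewrite !big_split /= in Hs2.
have sub : forall l, (forall x, x \in l -> x \in U3l) -> scard l = (\sum_(i <- iota 0 N) (i \in l : nat))%N.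
  by move=> l Hl; apply: scard_sum => x Hx; apply: inN; apply: Hl.
rewrite -!sub in Hs2.
have e1 := HF1 true (2 * t)%N t (introT andP (conj Ht Ht2)).
have e2 := HF1 true (2 * t)%N (2 * t)%N (introT andP (conj Ht2' (leqnn _))).
have e3 := HF1 true (3 * t)%N (2 * t)%N (introT andP (conj Ht2' H23)).
have e4 := HF1 false (2 * t)%N t (introT andP (conj Ht Ht2)).
have e5 := HF1 false (2 * t)%N (2 * t)%N (introT andP (conj Ht2' (leqnn _))).
have e6 := HF1 false (3 * t)%N (2 * t)%N (introT andP (conj Ht2' H23)).
have Hn : (scard Yl + scard Yl + 10 * t <= scard Xl + scard U2l + scard U2l + scard U3l)%N.
  tolia.
have HR := nat_to_R _ _ _ _ _ Hn.
have H3t : (0 < 3 * t)%N by tolia.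
have H2 := HU (2 * t)%N Ht2'.
have H3 := HU (3 * t)%N H3t.
have E2 : INR (2 * t)%N = 2 * INR t by rewrite -multE mult_INR; simpl; lra.
have E3 : INR (3 * t)%N = 3 * INR t by rewrite -multE mult_INR; simpl; lra.
rewrite E2 in H2; rewrite E3 in H3.
rewrite /Xl /Yl /U2l /U3l /h in HR H2 H3.
rewrite /Xl /Yl /h. lra.
- by [].
- move=> x; rewrite mem_cat => /orP [] Hx; rewrite mem_cat (FU_mono H23 Hx) ?orbT //.
- move=> x; rewrite mem_cat => /orP [].
  + rewrite mem_filter => /andP [_ Hx]; by rewrite mem_cat (FU_mono H23 Hx).
  + rewrite mem_filter => /andP [_ Hx]; by rewrite mem_cat (F_FU Ht2' H23 Hx).
- move=> x Hx; by rewrite mem_cat (F_FU Ht2' H23 Hx) orbT.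
- move=> x Hx; by rewrite mem_cat (FU_mono H23 (F_FU Ht2' (leqnn _) Hx)) orbT.
- move=> x Hx; by rewrite mem_cat (FU_mono H23 (F_FU Ht Ht2 Hx)) orbT.
- move=> x Hx; by rewrite mem_cat (F_FU Ht2' H23 Hx).
- move=> x Hx; by rewrite mem_cat (FU_mono H23 (F_FU Ht2' (leqnn _) Hx)).
- move=> x Hx; by rewrite mem_cat (FU_mono H23 (F_FU Ht Ht2 Hx)).
- move=> x /(YB true) [tau [kappa [K1 K2 K3 K4 Hx]]].
  by rewrite mem_cat (FU_mono (leq_trans K3 H23) (F_FU K1 K2 Hx)).
Qed.
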